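(* Let $p\in\mathbb{T}^{\mathcal{P}([n])}$ be a tropical Plücker vector, and let $L_p\subseteq\mathbb{T}^n$ be its tropical linear space. Under the identification $\mathbb{T}^{\mathcal{J}}\cong\mathbb{T}^n\times\mathbb{T}^n$, $x\mapsto((x_1,\dots,x_n),(x_{1^*},\dots,x_{n^*}))$, we have $\mathcal{C}(p)^\top=L_p\times L_{p^*}$.
   Context: $\mathbb{T}=\mathbb{R}\cup\{\infty\}$; $\mathcal{P}([n])$ the set of subsets of $[n]$. A tropical Wick vector is $p$ such that for all $S,T\subseteq[n]$ the minimum $\min_{i\in S\Delta T}(p_{S\Delta\{i\}}+p_{T\Delta\{i\}})$ is attained at least twice or equals $\infty$; a tropical Plücker vector is a tropical Wick vector whose support sets $\{S:p_S\neq\infty\}$ all have the same size $r_p$. Its dual is $p^*_S=p_{[n]\setminus S}$. Plücker circuits: for $T\subseteq[n]$ with $|T|=r_p+1$ define $d_T\in\mathbb{T}^n$ by $(d_T)_i=p_{T\setminus\{i\}}$ if $i\in T$, $\infty$ otherwise; a Plücker circuit is $d_T+\lambda\mathbf{1}$ ($\lambda\in\mathbb{R}$) with nonempty support. $x,y$ are tropically orthogonal if $\min_k(x_k+y_k)$ is attained at least twice or equals $\infty$. The tropical linear space $L_p\subseteq\mathbb{T}^n$ is the set of vectors tropically orthogonal to all Plücker circuits of $p$. Let $\mathcal{J}=\{1,\dots,n,1^*,\dots,n^*\}$; for $S\subseteq[n]$ let $\bar S=S\cup\{i^*:i\in[n]\setminus S\}$ and $\bar p_{\bar S}:=p_S$.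 For $T\subseteq[n]$, $(c_T)_i=\bar p_{\bar T\Delta\{i,i^*\}}$ if $i\in\bar T$, $\infty$ otherwise; the circuits of $p$ are vectors $c_T+\lambda\mathbf{1}$ with nonempty support, $\mathcal{C}(p)$ is their set, and $\mathcal{C}(p)^\top\subseteq\mathbb{T}^{\mathcal{J}}$ is the set of vectors tropically orthogonal to all of them. *)

(* Defs.v *)
From HB Require Import structures.
From mathcomp Require Import all_boot all_order all_algebra.
From mathcomp Require Import reals.
Set Implicit Arguments. Unset Strict Implicit. Unset Printing Implicit Defensive.
Import Order.TTheory GRing.Theory Num.Theory.
Local Open Scope ring_scope.

Section Tropical.
Variable R : realType.

(* The tropical numbers T = R ∪ {∞}; None represents ∞. *)
Definition trop := option R.

Definition tmul (a b : trop) : trop :=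
  match a, b with Some x, Some y => Some (x + y) | _, _ => None end.

Definition min_twice (I : finType) (A : {set I}) (f : I -> trop) : Prop :=
  (forall k, k \in A -> f k = None) \/
  exists i j m, [/\ i \in A, j \in A, i != j, f i = Some m & f j = Some m] /\
    forall k v, k \in A -> f k = Some v -> m <= v.

Definition symdiff (I : finType) (S T : {set I}) : {set I} :=
  (S :\: T) :|: (T :\: S).

Variable n : nat.

Definition is_wick (p : {set 'I_n} -> trop) : Prop :=
  forall S T : {set 'I_n},
    min_twice (symdiff S T)
      (fun i => tmul (p (symdiff S [set i])) (p (symdiff T [set i]))).

Definition support_rank (p : {set 'I_n} -> trop) (r : nat) : Prop :=
  forall S, p S <> None -> #|S| = r.

Definition is_plucker (p : {set 'I_n} -> trop) : Prop :=
  is_wick p /\ exists r, support_rank p r.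

Definition dual (p : {set 'I_n} -> trop) : {set 'I_n} -> trop :=
  fun S => p (~: S).

Definition trop_orth (I : finType) (x y : I -> trop) : Prop :=
  min_twice [set: I] (fun k => tmul (x k) (y k)).

Definition dvec (p : {set 'I_n} -> trop) (T : {set 'I_n}) (i : 'I_n) : trop :=
  if i \in T then p (T :\ i) else None.

(* Plücker circuits of p, where r = r_p is the support size of p. *)
Definition plucker_circuit (p : {set 'I_n} -> trop) (r : nat) (x : 'I_n -> trop)
  : Prop :=
  exists (T : {set 'I_n}) (lam : R),
    [/\ #|T| = r.+1, (forall i, x i = tmul (dvec p T i) (Some lam))
      & exists i, x i <> None].

Definition trop_linspace (p : {set 'I_n} -> trop) (r : nat) (x : 'I_n -> trop)
  : Prop :=
  forall y, plucker_circuit p r y -> trop_orth x y.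

(* J = {1..n} ⊔ {1*..n*}: inl i = i, inr i = i*. *)
Definition J := ('I_n + 'I_n)%type.

Definition star (j : J) : J :=
  match j with inl i => inr i | inr i => inl i end.

Definition bar (S : {set 'I_n}) : {set J} :=
  [set j : J | match j with inl i => i \in S | inr i => i \notin S end].

(* \bar p (\bar S) := p_S; on a subset of J we read off S from the unstarred part
   (this agrees with the definition on all sets of the form \bar S, which are the
   only arguments ever used). *)
Definition pbar (p : {set 'I_n} -> trop) (A : {set J}) : trop :=
  p [set i : 'I_n | inl i \in A].

Definition cvec (p : {set 'I_n} -> trop) (T : {set 'I_n}) (j : J) : trop :=
  if j \in bar T then pbar p (symdiff (bar T) [set j; star j]) else None.

Definition circuit (p : {set 'I_n} -> trop) (x : J -> trop) : Prop :=
  exists (T : {set 'I_n}) (lam : R),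
    (forall j, x j = tmul (cvec p T j) (Some lam)) /\ exists j, x j <> None.

Definition circuits_orth (p : {set 'I_n} -> trop) (x : J -> trop) : Prop :=
  forall y, circuit p y -> trop_orth x y.

End Tropical.

(* Main.v *)
Require Import Defs.
From HB Require Import structures.
From mathcomp Require Import all_boot all_order all_algebra.
From mathcomp Require Import reals.
From mathcomp Require Import zify.
Set Implicit Arguments. Unset Strict Implicit. Unset Printing Implicit Defensive.

Section Aux.
Variable R : realType.

Lemma mt_inl (I I' : finType) (h : (I + I')%type -> trop R) (g : I -> trop R) :
 (forall i, h (inl i) = g i) -> (forall i, h (inr i) = None) ->
 min_twice [set: (I + I')%type] h <-> min_twice [set: I] g.
Proof.
move=> Hl Hr; split.
- case=> [H|[i [j [m [[_ _ ij hi hj] B]]]]].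
  + by left=> k _; rewrite -Hl; apply: (H (_ k)); rewrite inE.
  + case: i ij hi => [i|i] ij hi; last by rewrite Hr in hi.
    case: j ij hj => [j|j] ij hj; last by rewrite Hr in hj.
    right; exists i, j, m; split; first split; rewrite ?inE -?Hl //.
    by move=> k v _ hk; apply: (B (inl k) v); rewrite ?inE ?Hl.
- case=> [H|[i [j [m [[_ _ ij hi hj] B]]]]].
  + by left=> -[k|k] _; rewrite ?Hl ?Hr //; apply: H; rewrite inE.
  + right; exists (inl i), (inl j), m; split; first split; rewrite ?inE ?Hl //.
    by move=> [k|k] v _; rewrite ?Hl ?Hr // => hk; apply: (B k v); rewrite ?inE.
Qed.

Lemma mt_inr (I I' : finType) (h : (I + I')%type -> trop R) (g : I' -> trop R) :
 (forall i, h (inr i) = g i) -> (forall i, h (inl i) = None) ->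
 min_twice [set: (I + I')%type] h <-> min_twice [set: I'] g.
Proof.
move=> Hl Hr; split.
- case=> [H|[i [j [m [[_ _ ij hi hj] B]]]]].
  + by left=> k _; rewrite -Hl; apply: (H (_ k)); rewrite inE.
  + case: i ij hi => [i|i] ij hi; first by rewrite Hr in hi.
    case: j ij hj => [j|j] ij hj; first by rewrite Hr in hj.
    right; exists i, j, m; split; first split; rewrite ?inE -?Hl //.
    by move=> k v _ hk; apply: (B (inr k) v); rewrite ?inE ?Hl.
- case=> [H|[i [j [m [[_ _ ij hi hj] B]]]]].
  + by left=> -[k|k] _; rewrite ?Hl ?Hr //; apply: H; rewrite inE.
  + right; exists (inr i), (inr j), m; split; first split; rewrite ?inE ?Hl //.
    by move=> [k|k] v _; rewrite ?Hl ?Hr // => hk; apply: (B k v); rewrite ?inE.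
Qed.

Lemma inl_eq (A B : eqType) (a b : A) : (@inl A B a == inl b) = (a == b).
Proof. by []. Qed.
Lemma inr_eq (A B : eqType) (a b : B) : (@inr A B a == inr b) = (a == b).
Proof. by []. Qed.
Lemma inlr_eq (A B : eqType) (a : A) (b : B) : (inl a == inr b) = false.
Proof. by []. Qed.
Lemma inrl_eq (A B : eqType) (a : A) (b : B) : (inr b == inl a) = false.
Proof. by []. Qed.

Variable n : nat.
Implicit Types (p : {set 'I_n} -> trop R) (T : {set 'I_n}).

Lemma cvec_inl p T i : cvec p T (inl i) = if i \in T then p (T :\ i) else None.
Proof.
rewrite /cvec /pbar inE; case: ifP => // iT; congr p; apply/setP => k.
rewrite !inE /= ?inl_eq ?inlr_eq ?inr_eq ?inrl_eq; case: (eqVneq k i) => [->|_] /=; rewrite ?iT ?andbF ?andbT ?orbF //.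
Qed.

Lemma cvec_inr p T i : cvec p T (inr i) = if i \in T then None else p (i |: T).
Proof.
rewrite /cvec /pbar inE; case iT: (i \in T) => //=; congr p; apply/setP => k.
rewrite !inE /= ?inl_eq ?inlr_eq ?inr_eq ?inrl_eq; case: (eqVneq k i) => [->|_] /=; rewrite ?iT ?andbF ?andbT ?orbF //.
Qed.

Lemma tmulN (a : trop R) l : tmul a (Some l) <> None -> a <> None.
Proof. by case: a. Qed.

Lemma tmulNr (a : trop R) : tmul a None = None.
Proof. by case: a. Qed.

Lemma compl_D1 T i : ~: (T :\ i) = i |: ~: T.
Proof. by rewrite setCD setUC. Qed.

End Aux.

Theorem proposition6p13 (R : realType) (n : nat) (p : {set 'I_n} -> trop R)
  (r r' : nat) :
  is_plucker p -> support_rank p r -> support_rank (dual p) r' ->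
  forall x : J n -> trop R,
    circuits_orth p x <->
    (trop_linspace p r (fun i => x (inl i)) /\
     trop_linspace (dual p) r' (fun i => x (inr i))).
Proof.
move=> _ Hr Hr' x.
have supp : forall S, p S <> None -> #|S| = r /\ r + r' = n.
  move=> S HS; have cS := Hr S HS.
  have : dual p (~: S) <> None by rewrite /dual setCK.
  move/Hr' => cC; split=> //; have := cardsC S; rewrite card_ord; lia.
split.
- move=> Hx; split.
  + move=> y [T [lam [cT Hy [i0 Hi0]]]].
    pose Y := fun j => tmul (cvec p T j) (Some lam).
    have HY : circuit p Y.
      exists T, lam; split=> //; exists (inl i0); rewrite /Y cvec_inl.
      by rewrite Hy /dvec in Hi0.
    apply: (mt_inl (h := fun k => tmul (x k) (Y k)) _ _).1; last exact: Hx HY.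
      by move=> i; rewrite Hy /Y cvec_inl /dvec.
    move=> i; rewrite /Y cvec_inr; case: ifP => iT; first by rewrite tmulNr.
    case E: (p (i |: T)) => [v|]; last by rewrite tmulNr.
    have : p (i |: T) <> None by rewrite E.
    move/supp => [c _]; move: c; rewrite cardsU1 iT cT; lia.
  + move=> y [T' [lam [cT Hy [i0 Hi0]]]].
    rewrite Hy /dvec /dual in Hi0; case: ifP Hi0 => // i0T Hi0.
    have [cS rr] := supp _ (tmulN Hi0).
    pose Y := fun j => tmul (cvec p (~: T') j) (Some lam).
    have HY : circuit p Y.
      exists (~: T'), lam; split=> //; exists (inr i0); rewrite /Y cvec_inr.
      by rewrite in_setC i0T /= -compl_D1.
    apply: (mt_inr (h := fun k => tmul (x k) (Y k)) _ _).1; last exact: Hx HY.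
      move=> i; rewrite Hy /Y cvec_inr /dvec /dual in_setC.
      by case: (i \in T') => //=; rewrite compl_D1.
    move=> i; rewrite /Y cvec_inl; case: ifP => iT; last by rewrite tmulNr.
    case E: (p (~: T' :\ i)) => [v|]; last by rewrite tmulNr.
    have : p (~: T' :\ i) <> None by rewrite E.
    move/supp => [c _]; move: c; have := cardsD1 i (~: T'); rewrite iT add1n.
    have := cardsC T'; rewrite card_ord; move=> h1 h2 h3; rewrite h2 h3 in h1; lia.
- move=> [HL HL'] y [T [lam [Hy [j0 Hj0]]]].
  case: j0 Hj0 => i0 Hj0; rewrite Hy in Hj0.
  + rewrite cvec_inl in Hj0; case: ifP Hj0 => // i0T Hj0.
    have [cS rr] := supp _ (tmulN Hj0).
    have cT : #|T| = r.+1 by by rewrite (cardsD1 i0 T) i0T add1n cS.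
    apply: (mt_inl (g := fun i => tmul (x (inl i)) (y (inl i))) _ _).2 => //.
      move=> i; rewrite Hy cvec_inr; case: ifP => iT; first by rewrite !tmulNr.
      case E: (p (i |: T)) => [v|]; last by rewrite !tmulNr.
      have : p (i |: T) <> None by rewrite E.
      move/supp => [c _]; move: c; rewrite cardsU1 iT cT; lia.
    apply: HL; exists T, lam; split=> //.
      by move=> i; rewrite Hy cvec_inl.
    by exists i0; rewrite Hy cvec_inl i0T.
  + rewrite cvec_inr in Hj0; case: ifP Hj0 => // i0T Hj0.
    have [cS rr] := supp _ (tmulN Hj0).
    move: cS; rewrite cardsU1 i0T /= add1n => cS.
    apply: (mt_inr (g := fun i => tmul (x (inr i)) (y (inr i))) _ _).2 => //.
      move=> i; rewrite Hy cvec_inl; case: ifP => iT; last by rewrite !tmulNr.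
      case E: (p (T :\ i)) => [v|]; last by rewrite !tmulNr.
      have : p (T :\ i) <> None by rewrite E.
      move/supp => [c _]; move: cS; rewrite (cardsD1 i T) iT add1n c; lia.
    apply: HL'; exists (~: T), lam; split.
    * apply/eqP; rewrite -(eqn_add2l #|T|) cardsC card_ord; apply/eqP; move: #|T| cS => t cS; lia.
    * move=> i; rewrite Hy cvec_inr /dvec /dual in_setC.
      by case: (i \in T) => //=; rewrite compl_D1 setCK.
    * by exists i0; rewrite Hy cvec_inr i0T.
Qed.
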